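(* Let $\ell$ be an odd multiple of $3$. Let $S\subseteq D_{8\ell+6}\setminus\{e\}$ with $|S|=8\ell+4$, and let $x$ be the non-identity element of $D_{8\ell+6}$ not in $S$. If $x$ has order $(4\ell+3)/3$, then $D_{8\ell+6}$ has an $S$-sequencing.
   Context: $D_{2m}=\langle u,v : u^m=e=v^2,\ vu=u^{m-1}v\rangle$ is the dihedral group of order $2m$. For $S\subseteq G\setminus\{e\}$ with $|S|=k$, an $S$-sequencing of $G$ is an ordering $(g_1,\dots,g_k)$ of the elements of $S$ such that the partial products $h_0=e$, $h_i=g_1\cdots g_i$ ($1\le i\le k$) are pairwise distinct. *)

(* Defs.v *)
From mathcomp Require Import all_boot all_fingroup.
Set Implicit Arguments. Unset Strict Implicit. Unset Printing Implicit Defensive.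
Local Open Scope group_scope.

Definition partial_prods (gT : finGroupType) (s : seq gT) : seq gT :=
  [seq foldl mulg 1 (take i s) | i <- iota 0 (size s).+1].

Definition S_sequencing (gT : finGroupType) (S : {set gT}) (s : seq gT) : Prop :=
  perm_eq s (enum S) /\ uniq (partial_prods s).

Definition is_dihedral (gT : finGroupType) (G : {group gT}) (m : nat) (u v : gT) : Prop :=
  [/\ G :=: <<[set u; v]>>, u ^+ m = 1, v ^+ 2 = 1, v * u = u ^+ (m.-1) * v
    & #|G| = (2 * m)%N].

(* Main.v *)
Require Import Defs.
From mathcomp Require Import all_boot all_fingroup all_solvable zify.
Set Implicit Arguments. Unset Strict Implicit. Unset Printing Implicit Defensive.

Definition V (r i : nat) : bool * nat :=
  if i < 2*r then (if odd i then (false, 2*r - i) else (false, 2*r + 4 + i))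
  else if i < 4*r + 2 then (if odd (i - 2*r) then (true, 4*r + 3 - (i - 2*r)) else (false, i - 2*r))
  else if i < 6*r + 4 then (if odd (i - (4*r+2)) then (true, 2*r + 2 - (i - (4*r+2)))
                            else (false, 2*r + 1 + (i - (4*r+2))))
  else if i == 6*r+4 then (true, 0)
  else if odd (i - (6*r+4)) then (true, i - (6*r+4) + 1) else (true, 4*r + 3 - (i - (6*r+4))).

Definition L (r i : nat) : bool * nat :=
  if i < 2*r then (if odd i then (if i == 2*r - 1 then (false, 4*r+2) else (false, 2*i + 5))
                   else (false, 4*r - 2 - 2*i))
  else if i < 4*r + 1 then (true, 4*r + 2 - 2*(i - 2*r))
  else if i == 4*r+1 then (true, 1)
  else if i == 4*r+2 then (true, 0)
  else if i < 6*r + 3 then (true, 4*r + 3 - 2*(i - (4*r+2)))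
  else if i == 6*r+3 then (false, 1)
  else if odd (i - (6*r+4)) then (false, 2*(i - (6*r+4)) + 2) else (false, 4*r + 1 - 2*(i - (6*r+4))).

Lemma V_bound r i : i < 8*r+5 -> (V r i).2 < 4*r+3.
Proof. rewrite /V => Hi; repeat case: ifP => ? /=; lia. Qed.

Lemma L_bound r i : 0 < r -> i < 8*r+4 -> (L r i).2 < 4*r+3.
Proof. rewrite /L => Hr Hi; repeat case: ifP => ? /=; lia. Qed.

Lemma L_ne r i : 0 < r -> i < 8*r+4 -> (L r i).1 = false -> (L r i).2 <> 0 /\ (L r i).2 <> 3.
Proof. rewrite /L => Hr Hi; repeat case: ifP => ? /=; move=> //= _; lia. Qed.

Lemma V_inj r i j : i < 8*r+5 -> j < 8*r+5 -> V r i = V r j -> i = j.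
Proof.
move=> Hi Hj H; have := congr1 fst H; have := congr1 snd H; rewrite /V.
repeat case: ifP => ?; move=> /= *; lia.
Qed.

Lemma L_inj r i j : 0 < r -> i < 8*r+4 -> j < 8*r+4 -> L r i = L r j -> i = j.
Proof.
move=> Hr Hi Hj H; have := congr1 fst H; have := congr1 snd H; rewrite /L.
repeat case: ifP => ?; move=> /= *; lia.
Qed.

Definition compat (m : nat) (p1 p2 q : bool * nat) : Prop :=
  q.1 = p1.1 (+) p2.1 /\
  (if p1.1 then (p2.2 + q.2 = p1.2) \/ (p2.2 + q.2 = p1.2 + m)
   else (p1.2 + q.2 = p2.2) \/ (p1.2 + q.2 = p2.2 + m)).

Lemma stepV r i : 0 < r -> i < 8*r+4 -> compat (4*r+3) (V r i) (V r i.+1) (L r i).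
Proof.
move=> Hr Hi; rewrite /compat /V /L.
repeat case: ifP => ?; rewrite /=; try (exfalso; lia); split => //; lia.
Qed.
Local Open Scope group_scope.


Definition psi (gT : finGroupType) (w v : gT) (p : bool * nat) : gT :=
  if p.1 then w ^+ p.2 * v else w ^+ p.2.

Lemma vX (gT : finGroupType) (w v : gT) : v * w = w^-1 * v ->
  forall k, v * w ^+ k = (w ^+ k)^-1 * v.
Proof.
move=> H; elim=> [|k IH]; first by rewrite expg0 invg1 mulg1 mul1g.
rewrite expgS mulgA H -mulgA IH mulgA -invMg.
by rewrite -expgSr -expgS.
Qed.

Lemma vXV (gT : finGroupType) (w v : gT) : v * w = w^-1 * v -> v * v = 1 ->
  forall k, v * (w ^+ k)^-1 = w ^+ k * v.
Proof.
move=> H Hv k.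
have E1 : v * w ^+ k * v = (w ^+ k)^-1 by rewrite (vX H) -mulgA Hv mulg1.
by rewrite -E1 !mulgA Hv mul1g.
Qed.

Lemma powm (gT : finGroupType) (w : gT) m a b : w ^+ m = 1 ->
  (a = b \/ a = b + m)%N -> w ^+ a = w ^+ b.
Proof. by move=> Hm [->|->] //; rewrite expgD Hm mulg1. Qed.

Lemma psi_step (gT : finGroupType) (w v : gT) m p1 p2 q :
  w ^+ m = 1 -> v * v = 1 -> v * w = w^-1 * v -> compat m p1 p2 q ->
  (psi w v p1)^-1 * psi w v p2 = psi w v q.
Proof.
case: p1 p2 q => [b1 a1] [b2 a2] [c l]; rewrite /compat /psi /= => Hm Hv Hvw [-> H].
have Hvi : v^-1 = v by apply/eqP; rewrite eq_invg_mul Hv.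
case: b1 H; case: b2 => /= H.
- rewrite -(powm Hm H) expgD !invMg Hvi.
  by rewrite -!mulgA (mulgA (w ^- a2)) mulVg mul1g mulgA (vXV Hvw Hv) -mulgA Hv mulg1.
- rewrite -(powm Hm H) expgD !invMg Hvi.
  by rewrite -!mulgA mulVg mulg1 (vXV Hvw Hv).
- by rewrite -(powm Hm H) expgD -mulgA mulKg.
- by rewrite -(powm Hm H) expgD mulKg.
Qed.

Lemma mod2 (x m : nat) : (x < 2 * m)%N -> x = x %% m \/ x = (x %% m + m)%N.
Proof.
move=> H; case: (ltnP x m) => Hx; first by left; rewrite modn_small.
right; have -> : x = ((x - m) + m)%N by rewrite subnK.
rewrite modnDr modn_small; [by []|lia].
Qed.

Lemma psi_mul (gT : finGroupType) (w v : gT) m p1 q :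
  w ^+ m = 1 -> v * v = 1 -> v * w = w^-1 * v -> (p1.2 < m)%N -> (q.2 < m)%N ->
  psi w v p1 * psi w v q =
  psi w v (p1.1 (+) q.1, if p1.1 then (p1.2 + (m - q.2)) %% m else (p1.2 + q.2) %% m).
Proof.
move=> Hm Hv Hvw H1 H2.
set p2 := (_, _).
have C : compat m p1 p2 q.
  rewrite /compat /p2 /=; split; first by rewrite addKb.
  case: (p1.1).
  - have := @mod2 (p1.2 + (m - q.2)) m; lia.
  - have := @mod2 (p1.2 + q.2) m; lia.
by rewrite -(psi_step Hm Hv Hvw C) mulKVg.
Qed.

Lemma dihedral_inj (gT : finGroupType) (G : {group gT}) (w v : gT) (m : nat) :
  (0 < m)%N -> w ^+ m = 1 -> v * v = 1 -> v * w = w^-1 * v ->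
  G \subset <<[set w; v]>> -> #|G| = (2 * m)%N ->
  (forall p1 p2, (p1.2 < m)%N -> (p2.2 < m)%N -> psi w v p1 = psi w v p2 -> p1 = p2) /\
  (forall y, y \in G -> exists p, (p.2 < m)%N /\ y = psi w v p).
Proof.
move=> Hm0 Hm Hv Hvw HG HcG.
pose f := fun p : bool * 'I_m => psi w v (p.1, val p.2).
pose T := f @: [set: bool * 'I_m].
have HT : group_set T.
  apply/group_setP; split.
    apply/imsetP; exists (false, Ordinal Hm0) => //.
  move=> y1 y2 /imsetP [p1 _ ->] /imsetP [p2 _ ->].
  rewrite /f (psi_mul (m:=m)) //=.
  apply/imsetP.
  exists (p1.1 (+) p2.1, Ordinal (ltn_pmod (if p1.1 then (val p1.2 + (m - val p2.2))%N
                                          else (val p1.2 + val p2.2)%N) Hm0)) => //.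
  by rewrite /=; case: (p1.1).
pose TG := Group HT.
have HGT : G \subset TG.
  apply: (subset_trans HG); rewrite gen_subG; apply/subsetP => y.
  rewrite !inE => /orP [] /eqP ->.
  - apply/imsetP; exists (false, Ordinal (ltn_pmod 1 Hm0)) => //.
    rewrite /f /psi /= -(@powm _ w m 1 (1 %% m) Hm) ?expg1 //; have := @mod2 1 m; lia.
  - apply/imsetP; exists (true, Ordinal Hm0) => //.
    by rewrite /f /psi /= expg0 mul1g.
have Hinj : {in [set: bool * 'I_m] &, injective f}.
  apply/imset_injP; rewrite eqn_leq leq_imset_card /= cardsT card_prod card_bool card_ord.
  by rewrite -HcG (subset_leq_card HGT).
split.
- case=> b1 a1 [b2 a2] /= H1 H2 E.
  have := Hinj (b1, Ordinal H1) (b2, Ordinal H2) (in_setT _) (in_setT _) E.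
  by case=> -> ->.
- move=> y /(subsetP HGT) /imsetP [p _ ->].
  exists (p.1, val p.2); split => //=; exact: ltn_ord.
Qed.

Unset Implicit Arguments.

Theorem theorem5p9 (gT : finGroupType) (G : {group gT}) (u v : gT) (l : nat)
    (S : {set gT}) (x : gT) :
  odd l -> (3 %| l)%N ->
  is_dihedral G (4 * l + 3) u v ->
  S \subset G :\ 1 -> #|S| = (8 * l + 4)%N ->
  x \in G -> x != 1 -> x \notin S ->
  #[x] = ((4 * l + 3) %/ 3)%N ->
  exists s : seq gT, S_sequencing S s.
Proof.
move=> Hodd H3 [HG Hum Hv2 Hvu HcG] HS HcS HxG Hx1 HxS Hox.
have Hl3 : (3 <= l)%N by lia.
have Hm0 : (0 < 4 * l + 3)%N by lia.
have Hv : v * v = 1 by rewrite -{2}(expg1 v) -expgS.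
have Huinv : u ^+ (4 * l + 3).-1 = u^-1.
  by apply/eqP; rewrite eq_sym eq_invg_mul -expgS prednK // Hum.
have Hvw : v * u = u^-1 * v by rewrite Hvu Huinv.
have HuG : u \in G by rewrite HG mem_gen // !inE eqxx.
have HvG : v \in G by rewrite HG mem_gen // !inE eqxx orbT.
have HGsub : G \subset <<[set u; v]>> by rewrite HG.
have [Uinj UG] := dihedral_inj Hm0 Hum Hv Hvw HGsub HcG.
have [[b a] [/= Ha Hxa]] := UG x HxG.
have Hou : #[u] = (4 * l + 3)%N.
  have Hd : (#[u] %| 4 * l + 3)%N by rewrite order_dvdn Hum.
  apply/eqP; rewrite eqn_leq (dvdn_leq Hm0 Hd) /= leqNgt; apply/negP => Hlt.
  have := Uinj (false, #[u]) (false, 0%N) Hlt Hm0.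
  rewrite /psi /= expg_order expg0 => /(_ erefl) [] Hu0.
  by have := order_gt0 u; rewrite Hu0.
have Hb : b = false.
  case: b Hxa => // Hxa.
  have : (#[x] %| 2)%N.
    rewrite order_dvdn expgS expg1 Hxa /psi /= mulgA -(mulgA _ v) (vX Hvw) mulgA mulgV mul1g Hv.
    by [].
  rewrite Hox => /dvdn_leq; clear -Hl3; lia.
have Hxe : x = u ^+ a by rewrite Hxa Hb.
set m := (4 * l + 3)%N in Hm0 Hum Huinv Hvw HcG Uinj UG Ha Hou Hox.
have Hm3 : (3 %| m)%N by rewrite /m; clear -H3; lia.
have Hg : gcdn m a = 3.
  have E := orderXgcd u a; rewrite -Hxe Hox Hou in E.
  have Hq0 : (0 < m %/ 3)%N by rewrite /m; clear -Hl3; lia.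
  have Hgm : (gcdn m a %| m)%N := dvdn_gcdl m a.
  have E1 : (m %/ 3 * 3 = m)%N := divnK Hm3.
  have E2 : (m %/ gcdn m a * gcdn m a = m)%N := divnK Hgm.
  rewrite -E in E2.
  by apply/eqP; rewrite -(eqn_pmul2l Hq0) E1 E2.
have H3a : (3 %| a)%N by rewrite -Hg dvdn_gcdr.
have Eq : m = (m %/ 3 * 3)%N by rewrite divnK.
have Ea : a = (a %/ 3 * 3)%N by rewrite divnK.
set q := m %/ 3 in Eq Hox. set a' := a %/ 3 in Ea.
have Hcop : gcdn q a' = 1%N.
  by move: Hg; rewrite Eq Ea -muln_gcdl; clear; lia.
pose k := if (3 %| a')%N then (a' + q)%N else a'.
have Hk : coprime m k.
  rewrite Eq coprimeMl; apply/andP; split.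
  - rewrite /coprime /k; case: ifP => _; by rewrite ?gcdnDr Hcop.
  - rewrite prime_coprime // /k; case: ifP => H.
    + apply/negP => H'. have Hq3 : (3 %| q)%N by clear -H H'; lia.
      have : (3 %| gcdn q a')%N by rewrite dvdn_gcd Hq3 H.
      by rewrite Hcop.
    + by rewrite H.
have Hk3 : u ^+ (k * 3) = u ^+ a.
  apply: (powm Hum); rewrite /k; case: ifP => _; clear -Ea Eq; lia.
pose w := u ^+ k.
have Hw : w ^+ m = 1 by rewrite /w -expgM mulnC expgM Hum expg1n.
have Hvw' : v * w = w^-1 * v by rewrite /w (vX Hvw).
have HGw : G \subset <<[set w; v]>>.
  rewrite HG gen_subG; apply/subsetP => y; rewrite !inE => /orP [] /eqP ->;
    last by rewrite mem_gen // !inE eqxx orbT.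
  have Hgen : generator <[u]> (u ^+ k) by rewrite generator_coprime Hou.
  have Hu : u \in <[w]> by rewrite /w -(eqP Hgen) cycle_id.
  apply: (subsetP _ _ Hu); rewrite cycle_subG mem_gen // !inE eqxx.
  by [].
have [Winj WG] := dihedral_inj Hm0 Hw Hv Hvw' HGw HcG.
have Hx3 : x = psi w v (false, 3%N) by rewrite /psi /= /w -expgM Hk3 Hxe.
have Hl0 : (0 < l)%N by clear -Hl3; lia.
have Hwin : forall p, psi w v p \in G.
  have HwG : w \in G by rewrite /w groupX.
  by case=> [[] c]; rewrite /psi /= ?groupM ?groupX.
pose s := [seq psi w v (L l i) | i <- iota 0 (8 * l + 4)].
have Hstep : forall i, (i < 8 * l + 4)%N -> psi w v (V l i) * psi w v (L l i) = psi w v (V l i.+1).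
  move=> i Hi; rewrite -(psi_step Hw Hv Hvw' (stepV Hl0 Hi)).
  by rewrite mulKVg.
have Hpp : forall i, (i <= 8 * l + 4)%N ->
    foldl mulg 1 (take i s) = (psi w v (V l 0))^-1 * psi w v (V l i).
  elim=> [|i IH] Hi; first by rewrite take0 /= mulVg.
  rewrite (take_nth 1) ?size_map ?size_iota // foldl_rcons IH ?(ltnW Hi) //.
  rewrite (nth_map 0%N) ?size_iota // nth_iota // add0n -mulgA Hstep //.
exists s; split.
- have HSD : S = G :\: [set 1; x].
    apply/eqP; rewrite eqEcard; apply/andP; split.
    - apply/subsetP => y Hy; have := subsetP HS y Hy; rewrite !inE => /andP [Hy1 HyG].
      rewrite negb_or Hy1 HyG /= andbT; apply/eqP => Hyx; by rewrite -Hyx Hy in HxS.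
    - have Hsub2 : [set 1; x] \subset G.
        by apply/subsetP => y; rewrite !inE => /orP [] /eqP ->; [exact: group1 | exact: HxG].
      rewrite cardsD HcS (setIidPr Hsub2) cards2 eq_sym Hx1 HcG /m.
      by clear; lia.
  have H3m : (3 < m)%N by rewrite /m; clear -Hl3; lia.
  have Hsub : {subset s <= enum S}.
    move=> y /mapP [i]; rewrite mem_iota add0n => /andP [_ Hi] ->.
    rewrite mem_enum HSD in_setD in_set2 Hwin andbT negb_or.
    have HLb := L_bound Hl0 Hi.
    apply/andP; split; apply/negP => /eqP E.
    - have : psi w v (L l i) = psi w v (false, 0%N) by rewrite E /psi /= expg0.
      move/(Winj (L l i) (false, 0%N) HLb Hm0) => EL.
      by have := L_ne Hl0 Hi; rewrite EL /= => /(_ erefl) [].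
    - have : psi w v (L l i) = psi w v (false, 3%N) by rewrite E Hx3.
      move/(Winj (L l i) (false, 3%N) HLb H3m) => EL.
      by have := L_ne Hl0 Hi; rewrite EL /= => /(_ erefl) [].
  have Huniq : uniq s.
    rewrite map_inj_in_uniq ?iota_uniq // => i j.
    rewrite !mem_iota !add0n => /andP [_ Hi] /andP [_ Hj] E.
    apply: (L_inj Hl0 Hi Hj); apply: Winj E; exact: L_bound.
  have Hsz : (size (enum S) <= size s)%N by rewrite -cardE HcS size_map size_iota.
  have [_ Heq] := uniq_min_size Huniq Hsub Hsz.
  by apply: uniq_perm => //; exact: enum_uniq.
- rewrite /partial_prods size_map size_iota.
  have -> : [seq foldl mulg 1 (take i s) | i <- iota 0 (8 * l + 4).+1] =
            [seq (psi w v (V l 0))^-1 * psi w v (V l i) | i <- iota 0 (8 * l + 4).+1].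
    by apply/eq_in_map => i; rewrite mem_iota add0n => /andP [_ Hi]; apply: Hpp.
  rewrite map_inj_in_uniq ?iota_uniq //.
  move=> i j; rewrite !mem_iota !add0n => /andP [_ Hi] /andP [_ Hj] /mulgI E.
  have Hi' : (i < 8 * l + 5)%N by clear -Hi; lia.
  have Hj' : (j < 8 * l + 5)%N by clear -Hj; lia.
  apply: (V_inj Hi' Hj'); apply: Winj E; exact: V_bound.
Qed.
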